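(* Let $(A,\mathfrak m)$ be a local ring and $I$ a proper ideal of $A$. Then $A \bowtie I$ is a Prüfer ring if and only if $A$ is a Prüfer ring and $I = aI$ for all $a \in \mathfrak m \setminus Z(A)$.
   Context: All rings are commutative with identity. For an ideal $I$ of a ring $A$, the amalgamated duplication of $A$ along $I$ is the subring $A \bowtie I := \{(a, a+i) : a \in A, i \in I\}$ of $A\times A$. $Z(A)$ is the set of zero-divisors of $A$. An ideal is regular if it contains a regular element (non-zero-divisor). A ring $R$ is a Prüfer ring if every finitely generated regular ideal of $R$ is invertible. *)

(* Defs.v *)
From HB Require Import structures.
From mathcomp Require Import all_boot all_order all_algebra.
Set Implicit Arguments. Unset Strict Implicit. Unset Printing Implicit Defensive.
Import GRing.Theory.
Local Open Scope ring_scope.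

(* All notions are stated relative to a subring S (given as a predicate) of an
   ambient commutative ring R; the ring "S" carries the induced operations. *)
Section Defs.
Variable R : comNzRingType.

Definition is_unit (x : R) : Prop := exists y : R, x * y = 1.

Definition regular_in (S : R -> Prop) (x : R) : Prop :=
  S x /\ forall y, S y -> x * y = 0 -> y = 0.

Definition zero_divisor_in (S : R -> Prop) (x : R) : Prop :=
  S x /\ exists y, S y /\ y <> 0 /\ x * y = 0.

Definition ideal_in (S : R -> Prop) (I : R -> Prop) : Prop :=
  (forall x, I x -> S x) /\ I 0 /\
  (forall x y, I x -> I y -> I (x + y)) /\
  (forall r x, S r -> I x -> I (r * x)).

Definition fin_gen_in (S : R -> Prop) (I : R -> Prop) : Prop :=
  exists g : seq R, (forall k, (k < size g)%N -> S g`_k) /\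
    forall x, I x <-> exists c : seq R, size c = size g /\
      (forall k, (k < size c)%N -> S c`_k) /\
      x = \sum_(k < size g) c`_k * g`_k.

Definition regular_ideal_in (S : R -> Prop) (I : R -> Prop) : Prop :=
  exists x, I x /\ regular_in S x.

(* Invertibility of an ideal I of S in the total ring of quotients Q(S):
   I * I^{-1} = S, where I^{-1} = {q in Q(S) | q I ⊆ S}.  Since
   I * I^{-1} ⊆ S is an S-submodule, this amounts to 1 ∈ I * I^{-1}, i.e.
   1 = Σ a_k q_k with a_k ∈ I, q_k ∈ I^{-1}.  Writing the q_k over a common
   regular denominator s (q_k = r_k / s with r_k, s ∈ S, s regular):
   r_k * i ∈ s S for all i ∈ I, and Σ a_k r_k = s. *)
Definition invertible_in (S : R -> Prop) (I : R -> Prop) : Prop :=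
  exists s : R, regular_in S s /\
  exists a r : seq R, size a = size r /\
    (forall k, (k < size a)%N ->
       I a`_k /\ S r`_k /\
       (forall i, I i -> exists t, S t /\ r`_k * i = s * t)) /\
    \sum_(k < size a) a`_k * r`_k = s.

Definition Prufer_in (S : R -> Prop) : Prop :=
  forall I, ideal_in S I -> fin_gen_in S I -> regular_ideal_in S I ->
    invertible_in S I.

Definition whole : R -> Prop := fun _ => True.

Definition Prufer : Prop := Prufer_in whole.

End Defs.

Definition amal_dup (A : comNzRingType) (I : A -> Prop) : (A * A)%type -> Prop :=
  fun p => exists a i, I i /\ p = (a, a + i).

(* Main.v *)
Require Import Defs.
From mathcomp Require Import all_boot all_order all_algebra.
From mathcomp Require Import ring.
From Stdlib Require Import Classical.
Import GRing.Theory.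
Local Open Scope ring_scope.

Set Implicit Arguments. Unset Strict Implicit.
Section Gen.
Variable R : comNzRingType.
Variable S : R -> Prop.

Definition subring := [/\ S 0, S 1, (forall x y, S x -> S y -> S (x + y)),
  (forall x y, S x -> S y -> S (x * y)) & (forall x, S x -> S (- x))].

Definition local_in (M : R -> Prop) :=
  (forall x, M x -> S x) /\ ~ M 1 /\ M 0 /\
      (forall x y, M x -> M y -> M (x + y)) /\
      (forall r x, S r -> M x -> M (r * x)) /\
      (forall x, S x -> ~ M x -> exists y, S y /\ x * y = 1).

Definition gen_ideal (g : seq R) (x : R) : Prop :=
  exists c : seq R, size c = size g /\
      (forall k, (k < size c)%N -> S c`_k) /\
      x = \sum_(k < size g) c`_k * g`_k.

Hypothesis HS : subring.

Lemma S_sum n (F : 'I_n -> R) : (forall k, S (F k)) -> S (\sum_(k < n) F k).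
Proof.
case: HS => S0 _ SD _ _ HF.
by apply: (big_ind S) => // k _; apply: HF.
Qed.

Lemma S_sub x y : S x -> S y -> S (x - y).
Proof. by case: HS => _ _ SD _ SN Hx Hy; apply: SD => //; apply: SN. Qed.

Lemma gen_ideal_ideal g : (forall k, (k < size g)%N -> S g`_k) ->
  ideal_in S (gen_ideal g).
Proof.
move=> Hg; case: HS => S0 S1 SD SM SN.
split; [|split; [|split]].
- move=> x [c [Hc [HcS ->]]]; apply: S_sum => k; apply: SM.
    by apply: HcS; rewrite Hc.
  exact: Hg.
- exists (nseq (size g) 0); rewrite size_nseq; split => //; split.
    by move=> k Hk; rewrite nth_nseq Hk.
  by rewrite big1 // => k _; rewrite nth_nseq ltn_ord mul0r.
- move=> x y [c [Hc [HcS ->]]] [d [Hd [HdS ->]]].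
  exists (mkseq (fun k => c`_k + d`_k) (size g)); rewrite size_mkseq.
  split => //; split.
    by move=> k Hk; rewrite nth_mkseq //; apply: SD; [apply: HcS; rewrite Hc|apply: HdS; rewrite Hd].
  rewrite -big_split /=; apply: eq_bigr => k _.
  by rewrite nth_mkseq // mulrDl.
- move=> r x Hr [c [Hc [HcS ->]]].
  exists (mkseq (fun k => r * c`_k) (size g)); rewrite size_mkseq.
  split => //; split.
    by move=> k Hk; rewrite nth_mkseq //; apply: SM => //; apply: HcS; rewrite Hc.
  rewrite mulr_sumr; apply: eq_bigr => k _.
  by rewrite nth_mkseq // mulrA.
Qed.

Lemma gen_mem g k : (k < size g)%N -> gen_ideal g g`_k.
Proof.
move=> Hk; case: HS => S0 S1 SD SM SN.
exists (mkseq (fun l => if l == k then 1 else 0) (size g)); rewrite size_mkseq.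
split => //; split.
  by move=> l Hl; rewrite nth_mkseq //; case: ifP.
rewrite (bigD1 (Ordinal Hk)) //= nth_mkseq // eqxx mul1r big1 ?addr0 //.
move=> l Hl; rewrite nth_mkseq //; case: eqP => [E|]; last by rewrite mul0r.
by exfalso; move/eqP: Hl; apply; apply/val_inj.
Qed.

Lemma principal_invertible (J : R -> Prop) z :
  ideal_in S J -> J z -> (forall w, J w -> exists t, S t /\ w = z * t) ->
  regular_ideal_in S J -> invertible_in S J.
Proof.
move=> [JS _] Jz Hz [x [Jx [Sx Hx]]].
case: (Hz x Jx) => c [Sc Ec].
exists z; split.
  split; first exact: JS.
  by move=> y Sy Ey; apply: Hx => //; rewrite Ec mulrAC Ey mul0r.
exists [:: z], [:: 1]; split => //; split.
  move=> k; rewrite ltnS leqn0 => /eqP -> /=; split => //; split.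
    by case: HS.
  by move=> i /Hz [t [St ->]]; exists t; rewrite mul1r.
by rewrite big_ord_recl big_ord0 /= mulr1 addr0.
Qed.

Lemma prufer_principal M (J : R -> Prop) :
  local_in M -> Prufer_in S -> ideal_in S J -> fin_gen_in S J ->
  regular_ideal_in S J ->
  exists z, J z /\ forall w, J w -> exists t, S t /\ w = z * t.
Proof.
move=> [MS [M1 [M0 [MD [MM Mu]]]]] HP HJ HJf HJr.
have [JS [J0 [JD JM]]] := HJ.
have [s [[Ss Hs] [a [r [Har [H Hsum]]]]]] := HP J HJ HJf HJr.
case: (classic (exists k, (k < size a)%N /\ exists t, S t /\
          r`_k * a`_k = s * t /\ ~ M t)).
- move=> [k [Hk [t [St [Et Mt]]]]].
  have [Jak [Srk Hrk]] := H k Hk.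
  have [u [Su Etu]] := Mu t St Mt.
  exists a`_k; split => // w Jw.
  have [t' [St' Et']] := Hrk w Jw.
  exists (t' * u); split; first by case: HS => _ _ _ SM _; apply: SM.
  have E : t * w = a`_k * t'.
    apply/eqP; rewrite -subr_eq0; apply/eqP; apply: Hs.
      by case: HS => _ _ _ SM _; apply: S_sub; apply: SM => //; [apply: JS| apply: JS].
    rewrite mulrBr mulrA -Et (mulrC r`_k) -mulrA Et' mulrCA subrr //.
  by rewrite mulrA -E mulrAC Etu mul1r.
- move=> Hno.
  have Hind : forall n, (n <= size a)%N -> exists T, M T /\
       \sum_(k < n) a`_k * r`_k = s * T.
    elim=> [|n IH] Hn.
      by exists 0; rewrite big_ord0 mulr0.
    have [T [MT ET]] := IH (ltnW Hn).
    have [Jan [Srn Hrn]] := H n Hn.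
    have [t [St Et]] := Hrn _ Jan.
    exists (T + t); split.
      apply: MD => //; apply: NNPP => Mt; apply: Hno.
      by exists n; split => //; exists t.
    by rewrite big_ord_recr /= ET mulrDr (mulrC a`_n) Et.
  have [T [MT ET]] := Hind _ (leqnn _).
  have E : 1 - T = 0.
    apply: Hs; first by apply: S_sub; [case: HS|apply: MS].
    by rewrite mulrBr mulr1 -ET Hsum subrr.
  by exfalso; apply: M1; move/eqP: E; rewrite subr_eq0 => /eqP ->.
Qed.

End Gen.
Unset Implicit Arguments.
Section Main.
Variable A : comNzRingType.
Variables m I : A -> Prop.
Hypothesis Hm : ideal_in (@whole A) m.
Hypothesis Hm1 : ~ m 1.
Hypothesis Hmu : forall x, ~ m x -> is_unit x.
Hypothesis HI : ideal_in (@whole A) I.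
Hypothesis HI1 : ~ I 1.

Let S := amal_dup I.

Lemma pairE (p q : A * A) : p.1 = q.1 -> p.2 = q.2 -> p = q.
Proof. by case: p; case: q => /= ? ? ? ? -> ->. Qed.

Lemma I0 : I 0. Proof. by case: HI => _ []. Qed.
Lemma ID x y : I x -> I y -> I (x + y). Proof. by case: HI => _ [_ [H _]]; apply: H. Qed.
Lemma IM r x : I x -> I (r * x). Proof. by case: HI => _ [_ [_ H]] Hx; apply: H. Qed.
Lemma IMr r x : I x -> I (x * r). Proof. by rewrite mulrC; apply: IM. Qed.
Lemma IN x : I x -> I (- x). Proof. by move=> Hx; rewrite -mulN1r; apply: IM. Qed.
Lemma IB x y : I x -> I y -> I (x - y). Proof. by move=> Hx Hy; apply: ID => //; apply: IN. Qed.

Lemma m0 : m 0. Proof. by case: Hm => _ []. Qed.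
Lemma mD x y : m x -> m y -> m (x + y). Proof. by case: Hm => _ [_ [H _]]; apply: H. Qed.
Lemma mM r x : m x -> m (r * x). Proof. by case: Hm => _ [_ [_ H]] Hx; apply: H. Qed.
Lemma mN x : m x -> m (- x). Proof. by move=> Hx; rewrite -mulN1r; apply: mM. Qed.
Lemma mB x y : m x -> m y -> m (x - y). Proof. by move=> Hx Hy; apply: mD => //; apply: mN. Qed.

Lemma Im x : I x -> m x.
Proof.
move=> Ix; apply: NNPP => nm; have [y Hy] := Hmu _ nm.
by apply: HI1; rewrite -Hy; apply: IMr.
Qed.

Lemma amalP p : S p <-> I (p.2 - p.1).
Proof.
split.
  by move=> [a [i [Ii ->]]] /=; rewrite addrC addKr.
move=> H; exists p.1, (p.2 - p.1); split => //.
by case: p H => a b /= _; rewrite addrC subrK.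
Qed.

Lemma SA_sub : subring S.
Proof.
split.
- by apply/amalP; rewrite subrr; exact: I0.
- by apply/amalP; rewrite subrr; exact: I0.
- move=> x y /amalP Hx /amalP Hy; apply/amalP => /=.
  have -> : x.2 + y.2 - (x.1 + y.1) = (x.2 - x.1) + (y.2 - y.1) by ring.
  exact: ID.
- move=> x y /amalP Hx /amalP Hy; apply/amalP => /=.
  have -> : x.2 * y.2 - x.1 * y.1 = x.2 * (y.2 - y.1) + (x.2 - x.1) * y.1 by ring.
  by apply: ID; [apply: IM|apply: IMr].
- move=> x /amalP Hx; apply/amalP => /=.
  have -> : - x.2 - - x.1 = - (x.2 - x.1) by ring.
  exact: IN.
Qed.

Definition MS (p : A * A) := S p /\ m p.1.

Lemma local_S : local_in S MS.
Proof.
split; first by move=> x [].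
split; first by move=> [].
split; first by split; [case: SA_sub|exact: m0].
split; first by move=> x y [Sx mx] [Sy my]; split; [case: SA_sub => _ _ H _ _; apply: H|apply: mD].
split; first by move=> r x Sr [Sx mx]; split; [case: SA_sub => _ _ _ H _; apply: H|apply: mM].
move=> p Sp nM.
have nm1 : ~ m p.1 by move=> h; apply: nM.
have [y1 Hy1] := Hmu _ nm1.
have /amalP Ij := Sp.
have nm2 : ~ m p.2.
  move=> h; apply: nm1; have -> : p.1 = p.2 - (p.2 - p.1) by ring.
  by apply: mB => //; apply: Im.
have [y2 Hy2] := Hmu _ nm2.
exists (y1, y2); split.
  apply/amalP => /=.
  have -> : y2 - y1 = (y1 * y2) * - (p.2 - p.1).
    have -> : (y1 * y2) * - (p.2 - p.1) = y2 * (p.1 * y1) - y1 * (p.2 * y2) by ring.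
    by rewrite Hy1 Hy2 !mulr1.
  by apply: IM; apply: IN.
by apply: pairE.
Qed.

Lemma sum_fst n (F : 'I_n -> A * A) : (\sum_(k < n) F k).1 = \sum_(k < n) (F k).1.
Proof. by apply: (big_morph fst). Qed.
Lemma sum_snd n (F : 'I_n -> A * A) : (\sum_(k < n) F k).2 = \sum_(k < n) (F k).2.
Proof. by apply: (big_morph snd). Qed.

Lemma reg_fst X : regular_in S X -> regular_in (@whole A) X.1.
Proof.
move=> [SX HX]; split => // b _ Hb.
have /amalP Ij := SX.
set j := X.2 - X.1 in Ij.
have E1 : (j * b, 0) = 0 :> A * A.
  apply: HX; first by apply/amalP => /=; rewrite sub0r; apply: IN; apply: IMr.
  by apply: pairE => /=; rewrite ?mulr0 // mulrCA Hb mulr0.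
have jb : j * b = 0 by have := congr1 fst E1.
have E2 : (b, b) = 0 :> A * A.
  apply: HX; first by apply/amalP => /=; rewrite subrr; exact: I0.
  apply: pairE => //=.
  have -> : X.2 = X.1 + j by rewrite /j; ring.
  by rewrite mulrDl Hb jb addr0.
by have := congr1 fst E2.
Qed.

Lemma reg_diag x : regular_in (@whole A) x -> regular_in S (x, x).
Proof.
move=> [_ Hx]; split; first by apply/amalP; rewrite subrr; exact: I0.
move=> p _ Hp; apply: pairE => /=.
  by apply: Hx => //; have := congr1 fst Hp.
by apply: Hx => //; have := congr1 snd Hp.
Qed.

Lemma whole_sub : subring (@whole A).
Proof. by []. Qed.

Lemma local_A : local_in (@whole A) m.
Proof.
split => //; split => //; split; first exact: m0.
split; first exact: mD.
split; first by move=> r x _; apply: mM.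
by move=> x _ nx; have [y Hy] := Hmu _ nx; exists y.
Qed.


Lemma fwd_A : Prufer_in S -> Prufer A.
Proof.
move=> HP J HJ [g [_ HJg]] [x [Jx Rx]].
pose d (y : A) := (y, y).
pose g' := map d g.
pose J' := gen_ideal S g'.
have Sg' : forall k, (k < size g')%N -> S g'`_k.
  move=> k; rewrite size_map => Hk; rewrite (nth_map 0) //.
  by apply/amalP; rewrite subrr; exact: I0.
have HJ' : ideal_in S J' by apply: gen_ideal_ideal => //; exact: SA_sub.
have diag_in : forall y, J y -> J' (y, y).
  move=> y /HJg [c [Hc [_ ->]]].
  exists (map d c); rewrite !size_map; split => //; split.
    move=> k Hk; rewrite (nth_map 0) ?size_map //.
    by apply/amalP; rewrite subrr; exact: I0.
  apply: pairE => /=; [rewrite sum_fst|rewrite sum_snd]; apply: eq_bigr => k _ /=;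
    by rewrite (nth_map 0) ?Hc // (nth_map 0).
have [z [J'z Hz]] := prufer_principal SA_sub local_S HP HJ'
   (ex_intro _ g' (conj Sg' (fun x => iff_refl _)))
   (ex_intro _ (x, x) (conj (diag_in _ Jx) (reg_diag x Rx))).
apply: (@principal_invertible _ _ whole_sub J z.1) => //.
- have [c [Hc [_ Ez]]] := J'z.
  apply/HJg; exists (map fst c); rewrite size_map; split.
    by rewrite Hc size_map.
  split => //.
  rewrite Ez sum_fst size_map; apply: eq_bigr => k _ /=.
  by rewrite (nth_map 0) ?Hc ?size_map // (nth_map 0) // Hc size_map.
- move=> w /diag_in /Hz [t [_ Et]].
  by exists t.1; split => //; have := congr1 fst Et.
- by exists x.
Qed.


Lemma fwd_C : Prufer_in S -> forall a, m a -> ~ zero_divisor_in (@whole A) a ->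
      forall x, I x <-> exists y, I y /\ x = a * y.
Proof.
move=> HP a ma nz x; split; last by move=> [y [Iy ->]]; apply: IM.
move=> Ix.
have Ha : forall y, a * y = 0 -> y = 0.
  move=> y Hy; apply: NNPP => ny; apply: nz; split => //.
  by exists y.
pose g := [:: (a, a); (0, x)].
pose J' := gen_ideal S g.
have Sg : forall k, (k < size g)%N -> S g`_k.
  case=> [|[|k]] // _; apply/amalP => /=; rewrite ?subrr ?subr0 //; exact: I0.
have HJ' : ideal_in S J' by apply: gen_ideal_ideal => //; exact: SA_sub.
have Ra : regular_in S (a, a) by apply: reg_diag; split => // y _; apply: Ha.
have J1 : J' (a, a) by apply: (@gen_mem _ _ SA_sub g 0).
have J2 : J' (0, x) by apply: (@gen_mem _ _ SA_sub g 1).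
have [z [J'z Hz]] := prufer_principal SA_sub local_S HP HJ'
   (ex_intro _ g (conj Sg (fun x => iff_refl _)))
   (ex_intro _ (a, a) (conj J1 Ra)).
have [w [Sw Ew]] := Hz _ J1.
have [w' [Sw' Ew']] := Hz _ J2.
have [c [Hc [Sc Ez]]] := J'z.
have Ez1 : z.1 = (c`_0).1 * a.
  by rewrite Ez sum_fst /= big_ord_recl big_ord_recl big_ord0 /= mulr0 !addr0.
have Ew1 : a = z.1 * w.1 by have := congr1 fst Ew.
have Ew'1 : 0 = z.1 * w'.1 by have := congr1 fst Ew'.
have Ew'2 : x = z.2 * w'.2 by have := congr1 snd Ew'.
have w'0 : w'.1 = 0.
  by apply: Ha; rewrite Ew1 mulrAC -Ew'1 mul0r.
have cw : (c`_0).1 * w.1 = 1.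
  apply/eqP; rewrite -subr_eq0; apply/eqP; apply: Ha.
  by rewrite mulrBr mulr1 mulrA (mulrC a) -Ez1 -Ew1 subrr.
have nmw : ~ MS w by move=> [_ mw]; apply: Hm1; rewrite -cw; apply: mM.
have [_ [_ [_ [_ [_ Mu]]]]] := local_S.
have [u [Su Ewu]] := Mu _ Sw nmw.
have Ez' : z = (a, a) * u by rewrite Ew -mulrA Ewu mulr1.
have Iw' : I w'.2 by move/amalP: Sw'; rewrite w'0 subr0.
have /amalP Iu := Su.
exists (u.2 * w'.2); split; first by apply: IM.
by rewrite Ew'2 Ez' /= mulrA.
Qed.


Lemma bwd : Prufer A -> (forall a, m a -> ~ zero_divisor_in (@whole A) a ->
      forall x, I x <-> exists y, I y /\ x = a * y) -> Prufer_in S.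
Proof.
move=> HPA HC J HJ [G [SG HJG]] [X [JX RX]].
have [JS _] := HJ.
pose G1 := map fst G.
pose J1 := gen_ideal (@whole A) G1.
have HJ1 : ideal_in (@whole A) J1 by apply: gen_ideal_ideal.
have fst_in : forall W, J W -> J1 W.1.
  move=> W /HJG [e [He [_ ->]]].
  exists (map fst e); rewrite !size_map; split => //; split => //.
  rewrite sum_fst; apply: eq_bigr => k _ /=.
  by rewrite (nth_map 0) ?He // (nth_map 0).
have [z1 [J1z Hz1]] := prufer_principal whole_sub local_A HPA HJ1
   (ex_intro _ G1 (conj (fun _ _ => Logic.I) (fun x => iff_refl _)))
   (ex_intro _ X.1 (conj (fst_in _ JX) (reg_fst X RX))).
have [d [Hd [_ Ez1]]] := J1z.
pose d' := map (fun y : A => (y, y)) d.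
pose Z := \sum_(k < size G) d'`_k * G`_k.
have JZ : J Z.
  apply/HJG; exists d'; rewrite size_map; split; first by rewrite Hd size_map.
  split => // k Hk; rewrite (nth_map 0) //.
  by apply/amalP; rewrite subrr; exact: I0.
have Z1 : Z.1 = z1.
  rewrite Ez1 sum_fst size_map; apply: eq_bigr => k _ /=.
  rewrite (nth_map 0) ?(nth_map 0) //= ?Hd ?size_map //.
have SZ : S Z by apply: JS.
have Rz1 : forall y, z1 * y = 0 -> y = 0.
  have [t [_ Et]] := Hz1 _ (fst_in _ JX).
  move=> y Hy; apply: (reg_fst X RX).2 => //.
  by rewrite Et mulrAC Hy mul0r.
have key : forall i, I i -> exists i', I i' /\ i = Z.2 * i'.
  move=> i Ii.
  have /amalP Ij := SZ.
  have EZ2 : Z.2 = z1 + (Z.2 - Z.1) by rewrite -Z1; ring.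
  case: (classic (m z1)) => mz.
  - have nzd : ~ zero_divisor_in (@whole A) z1.
      by move=> [_ [y [_ [y0 Hy]]]]; apply: y0; apply: Rz1.
    have [f [If Ef]] := (HC z1 mz nzd i).1 Ii.
    have [e [Ie Ee]] := (HC z1 mz nzd _).1 Ij.
    have n1e : ~ m (1 + e).
      move=> h; apply: Hm1; have -> : 1 = (1 + e) - e by ring.
      by apply: mB => //; apply: Im.
    have [v Hv] := Hmu _ n1e.
    exists (v * f); split; first by apply: IM.
    rewrite EZ2 Ee Ef.
    have -> : (z1 + z1 * e) * (v * f) = z1 * f * ((1 + e) * v) by ring.
    by rewrite Hv mulr1.
  - have nZ : ~ m Z.2.
      move=> h; apply: mz; have -> : z1 = Z.2 - (Z.2 - Z.1) by rewrite Z1; ring.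
      by apply: mB => //; apply: Im.
    have [v Hv] := Hmu _ nZ.
    exists (v * i); split; first by apply: IM.
    by rewrite mulrA Hv mul1r.
apply: (@principal_invertible _ _ SA_sub J Z) => //; last by exists X.
move=> W JW.
have [t [_ Et]] := Hz1 _ (fst_in _ JW).
have SW : S W by apply: JS.
have /amalP IW := SW.
have /amalP Ij := SZ.
have Iw : I (W.2 - Z.2 * t).
  have -> : W.2 - Z.2 * t = (W.2 - W.1) - (Z.2 - Z.1) * t by rewrite Et -Z1; ring.
  by apply: IB => //; apply: IMr.
have [i' [Ii' Ei']] := key _ Iw.
exists ((t, t) + (0, i')); split.
  case: SA_sub => _ _ SD _ _; apply: SD; apply/amalP => /=;
    rewrite ?subrr ?subr0 //; exact: I0.
apply: pairE => /=.
  by rewrite addr0 Z1.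
by rewrite mulrDr -Ei'; ring.
Qed.

End Main.

Theorem corollary2p7 (A : comNzRingType) (m I : A -> Prop) :
  (* (A, m) is a local ring with maximal ideal m *)
  ideal_in (@whole A) m -> ~ m 1 -> (forall x, ~ m x -> is_unit x) ->
  (* I is a proper ideal of A *)
  ideal_in (@whole A) I -> ~ I 1 ->
  (Prufer_in (amal_dup I) <->
   @Prufer A /\
   (forall a, m a -> ~ zero_divisor_in (@whole A) a ->
      forall x, I x <-> exists y, I y /\ x = a * y)).
Proof.
move=> Hm Hm1 Hmu HI HI1; split.
  move=> HP; split.
    exact: (@fwd_A A m I Hm Hm1 Hmu HI HI1 HP).
  exact: (@fwd_C A m I Hm Hm1 Hmu HI HI1 HP).
move=> [HPA HC].
exact: (@bwd A m I Hm Hm1 Hmu HI HI1 HPA HC).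
Qed.
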